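(* Let $n\ge 2$ and $m_1,\dots,m_n\ge1$, $m=m_1+\dots+m_n$. Assume: (a) each $h_i:Q_q^{m_i}\to Q_q$ ($i=1,\dots,n$) is an $m_i$-ary iterated group (for a group on $Q_q$ with identity $0$); (b) $f:Q_q^n\to Q_q$ is an isotopically transitive $n$-ary quasigroup, with $G_f$ the autotopy group of its graph $\{(x_0,x_1,\dots,x_n): x_0=f(x_1,\dots,x_n)\}$, whose elements are written $\overline\sigma=(\sigma_0,\sigma_1,\dots,\sigma_n)$; (c) for every $i\in\{1,\dots,n\}$ and every $\overline\sigma\in G_f$ there exists an isotopism $\overline\tau_i$ of $Q_q^{m_i}$ with $h_i(\overline\tau_i\overline z_i)=\sigma_i h_i(\overline z_i)$ for all $\overline z_i\in Q_q^{m_i}$. Then the $m$-ary quasigroup $g(\overline z_1,\dots,\overline z_n)=f(h_1(\overline z_1),\dots,h_n(\overline z_n))$ is isotopically transitive.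
   Context: An $n$-ary quasigroup of order $q$ is a function $f:Q_q^n\to Q_q$ such that $f(\overline x)\ne f(\overline y)$ whenever $\overline x,\overline y$ differ in exactly one coordinate; it is called isotopically transitive if its graph $\{(x_0,\overline x): x_0=f(\overline x)\}\subseteq Q_q^{n+1}$ is isotopically transitive. An $m$-ary iterated group is a function $(z_1,\dots,z_m)\mapsto z_1\circ\cdots\circ z_m$ for a group operation $\circ$ on $Q_q$. An isotopism of $Q_q^N$ is a map $\overline{x}\mapsto(\tau_1x_1,\dots,\tau_Nx_N)$ with $\tau_i$ permutations of $Q_q$; the autotopy group of $A\subseteq Q_q^N$ is the group of isotopisms mapping $A$ onto $A$, and $A$ is isotopically transitive if this group acts transitively on $A$. *)

(* Defs.v *)
From HB Require Import structures.
From mathcomp Require Import all_boot all_order all_fingroup.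
Set Implicit Arguments. Unset Strict Implicit. Unset Printing Implicit Defensive.

(* Q_q is modelled as the ordinal type 'I_q = {0,...,q-1}.
   A point of Q_q^N (coordinates indexed by a finite type I) is a
   finite function {ffun I -> 'I_q}. *)

Definition differ_in_one (I : finType) (T : eqType) (x y : {ffun I -> T}) : bool :=
  #|[set i | x i != y i]| == 1.

Definition is_quasigroup (q : nat) (I : finType) (f : {ffun I -> 'I_q} -> 'I_q) : Prop :=
  forall x y : {ffun I -> 'I_q}, differ_in_one x y -> f x != f y.

Definition isotopism (q : nat) (I : finType) := I -> {perm 'I_q}.

Definition iso_apply (q : nat) (I : finType) (tau : isotopism q I)
  (x : {ffun I -> 'I_q}) : {ffun I -> 'I_q} := [ffun i => tau i (x i)].

Definition is_autotopy (q : nat) (I : finType) (tau : isotopism q I)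
  (A : {set {ffun I -> 'I_q}}) : Prop :=
  [set iso_apply tau x | x in A] = A.

Definition iso_transitive (q : nat) (I : finType) (A : {set {ffun I -> 'I_q}}) : Prop :=
  forall x y, x \in A -> y \in A ->
    exists tau : isotopism q I, is_autotopy tau A /\ iso_apply tau x = y.

(* graph {(x_0,x_1,...,x_n) : x_0 = f(x_1,...,x_n)} of an n-ary function,
   a subset of Q_q^{n+1}, coordinate 0 being x_0 *)
Definition qgraph (q n : nat) (f : {ffun 'I_n -> 'I_q} -> 'I_q) : {set {ffun 'I_n.+1 -> 'I_q}} :=
  [set x : {ffun 'I_n.+1 -> 'I_q} | x ord0 == f [ffun i => x (lift ord0 i)]].

Definition iso_transitive_qg (q n : nat) (f : {ffun 'I_n -> 'I_q} -> 'I_q) : Prop :=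
  iso_transitive (qgraph f).

Definition is_group_op (T : Type) (op : T -> T -> T) (e : T) : Prop :=
  (forall x y z, op x (op y z) = op (op x y) z) /\
  (forall x, op e x = x /\ op x e = x) /\
  (forall x, exists y, op x y = e /\ op y x = e).

Definition is_iterated_group (q m : nat) (h : {ffun 'I_m -> 'I_q} -> 'I_q) : Prop :=
  exists (op : 'I_q -> 'I_q -> 'I_q) (e : 'I_q),
    is_group_op op e /\ nat_of_ord e = 0 /\
    forall z : {ffun 'I_m -> 'I_q},
      h z = foldr op e [seq z j | j <- enum 'I_m].

(* the composition g(z_1,...,z_n) = f(h_1(z_1),...,h_n(z_n)), with the m
   arguments (m = m_1+...+m_n) concatenated block by block *)
Definition compose_qg (q n : nat) (mi : 'I_n -> nat)
  (f : {ffun 'I_n -> 'I_q} -> 'I_q)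
  (h : forall i : 'I_n, {ffun 'I_(mi i) -> 'I_q} -> 'I_q)
  (z : {ffun 'I_(\sum_(i < n) mi i) -> 'I_q}) : 'I_q :=
  f [ffun i => h i [ffun j => z (tagnat.Rank i j)]].

(* Main.v *)
Require Import Defs.
From mathcomp Require Import all_boot all_order all_fingroup.
Set Implicit Arguments. Unset Strict Implicit. Unset Printing Implicit Defensive.

Section Grp.
Variables (T : finType) (op : T -> T -> T) (e : T).
Hypothesis G : is_group_op op e.

Lemma opA x y z : op x (op y z) = op (op x y) z.
Proof. by case: G. Qed.
Lemma op0 x : op e x = x. Proof. by case: G => _ [H _]; case: (H x). Qed.
Lemma op0r x : op x e = x. Proof. by case: G => _ [H _]; case: (H x). Qed.
Lemma inv_ex x : exists y, op x y = e /\ op y x = e.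
Proof. by case: G => _ [_ H]. Qed.

Lemma cancel_l a x y : op a x = op a y -> x = y.
Proof.
move=> H; have [a' [_ Ha']] := inv_ex a.
by rewrite -(op0 x) -(op0 y) -Ha' -!opA H.
Qed.
Lemma cancel_r a x y : op x a = op y a -> x = y.
Proof.
move=> H; have [a' [Ha' _]] := inv_ex a.
by rewrite -(op0r x) -(op0r y) -Ha' !opA H.
Qed.

Definition Pf m (z : {ffun 'I_m -> T}) := foldr op e [seq z j | j <- enum 'I_m].

Lemma Pf_S m (z : {ffun 'I_m.+1 -> T}) :
  Pf z = op (z ord0) (Pf [ffun j => z (lift ord0 j)]).
Proof.
rewrite /Pf enum_ordSl /= -map_comp; congr (op _ (foldr _ _ _)).
by apply: eq_map => j; rewrite /= ffunE.
Qed.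

Lemma Pf_0 (z : {ffun 'I_0 -> T}) : Pf z = e.
Proof. by rewrite /Pf; have -> : enum 'I_0 = [::] by apply/size0nil; rewrite size_enum_ord. Qed.

Lemma transl m : forall (a b : {ffun 'I_m -> T}) l0, op l0 (Pf a) = Pf b ->
  exists tau : 'I_m -> {perm T}, (forall j, tau j (a j) = b j) /\
    forall z : {ffun 'I_m -> T}, Pf [ffun j => tau j (z j)] = op l0 (Pf z).
Proof.
elim: m => [|m IH] a b l0.
  rewrite !Pf_0 op0r => ->; exists (fun _ => 1%g); split; first by case.
  by move=> z; rewrite !Pf_0 op0.
rewrite !Pf_S => H.
have [binv [Hb1 Hb2]] := inv_ex (b ord0).
set l1 := op binv (op l0 (a ord0)).
have H1 : op l1 (Pf [ffun j => a (lift ord0 j)]) = Pf [ffun j => b (lift ord0 j)].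
  by rewrite /l1 -!opA H opA Hb2 op0.
have [tau' [Ht1 Ht2]] := IH _ _ _ H1.
have [l1i [Hl1 Hl2]] := inv_ex l1.
have t0inj : injective (fun x => op (op l0 x) l1i).
  by move=> x y /cancel_r /cancel_l.
pose tau j := if unlift ord0 j is Some j' then tau' j' else perm t0inj.
have tau0 : tau ord0 = perm t0inj by rewrite /tau unlift_none.
have tauS j : tau (lift ord0 j) = tau' j by rewrite /tau liftK.
exists tau; split.
  move=> j; case: (unliftP ord0 j) => [j'|] ->; last first.
    rewrite tau0 permE /=.
    have E : op l0 (a ord0) = op (b ord0) l1 by rewrite /l1 opA Hb1 op0.
    by rewrite E -opA Hl1 op0r.
  by rewrite tauS; have := Ht1 j'; rewrite !ffunE.
move=> z; rewrite Pf_S ffunE tau0 permE.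
have -> : [ffun j => [ffun j0 => tau j0 (z j0)] (lift ord0 j)] =
          [ffun j => tau' j ([ffun j0 => z (lift ord0 j0)] j)].
  by apply/ffunP => j; rewrite !ffunE tauS.
rewrite Ht2 Pf_S.
by rewrite opA -(opA _ l1i l1) Hl2 op0r -opA.
Qed.

Lemma Pf_qg m : forall (z z' : {ffun 'I_m -> T}) k, z k != z' k ->
  (forall i, i != k -> z i = z' i) -> Pf z != Pf z'.
Proof.
elim: m => [|m IH] z z' k; first by case: k.
move=> Hk Ho; rewrite !Pf_S.
case: (unliftP ord0 k) => [k'|] Ek; subst k.
  rewrite (Ho ord0); last exact: neq_lift.
  apply/negP => /eqP /cancel_l /eqP; apply/negP.
  apply: (IH _ _ k'); first by rewrite !ffunE.
  by move=> i Hi; rewrite !ffunE Ho // (inj_eq (@lift_inj _ ord0)).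
have -> : [ffun j => z (lift ord0 j)] = [ffun j => z' (lift ord0 j)].
  by apply/ffunP => j; rewrite !ffunE Ho // neq_lift.
by apply/negP => /eqP /cancel_r /eqP; apply/negP.
Qed.

End Grp.

Lemma differP (I : finType) (T : eqType) (x y : {ffun I -> T}) :
  differ_in_one x y <-> exists k, x k != y k /\ forall i, i != k -> x i = y i.
Proof.
rewrite /differ_in_one; split.
  move/cards1P => [k Hk]; exists k; split.
    have : k \in [set k] by rewrite in_set1.
    by rewrite -Hk inE.
  move=> i Hi; apply/eqP; apply/negPn; apply/negP => Hn.
  have : i \in [set i | x i != y i] by rewrite inE.
  by rewrite Hk in_set1 (negbTE Hi).
move=> [k [Hk Ho]]; apply/cards1P; exists k; apply/setP => i.
rewrite !inE; case: (eqVneq i k) => [->|Hi]; first by rewrite Hk.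
by rewrite Ho // eqxx.
Qed.
From Stdlib Require Import ClassicalEpsilon.

Lemma dchoice (I : Type) (B : I -> Type) (P : forall i, B i -> Prop) :
  (forall i, exists b, P i b) -> exists F : forall i, B i, forall i, P i (F i).
Proof.
move=> H; exists (fun i => proj1_sig (constructive_indefinite_description _ (H i))).
by move=> i; case: (constructive_indefinite_description _ _).
Qed.

Definition blk (q n : nat) (mi : 'I_n -> nat) (X : {ffun 'I_(\sum_(i < n) mi i) -> 'I_q})
  (i : 'I_n) : {ffun 'I_(mi i) -> 'I_q} := [ffun j => X (tagnat.Rank i j)].
Definition tl (q k : nat) (x : {ffun 'I_k.+1 -> 'I_q}) : {ffun 'I_k -> 'I_q} :=
  [ffun j => x (lift ord0 j)].
Definition Ux (q n : nat) (mi : 'I_n -> nat)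
  (h : forall i : 'I_n, {ffun 'I_(mi i) -> 'I_q} -> 'I_q)
  (x : {ffun 'I_(\sum_(i < n) mi i).+1 -> 'I_q}) : {ffun 'I_n.+1 -> 'I_q} :=
  [ffun k => if unlift ord0 k is Some i then h i (blk (tl x) i) else x ord0].

Lemma U_graph (q n : nat) (mi : 'I_n -> nat) (f : {ffun 'I_n -> 'I_q} -> 'I_q)
  (h : forall i : 'I_n, {ffun 'I_(mi i) -> 'I_q} -> 'I_q) x :
  (Ux h x \in qgraph f) = (x \in qgraph (compose_qg f h)).
Proof.
rewrite !inE /Ux ffunE unlift_none /compose_qg; congr (_ == f _).
by apply/ffunP => i; rewrite !ffunE liftK.
Qed.

Lemma aut_mem (q : nat) (I : finType) (s : isotopism q I) A w :
  is_autotopy s A -> w \in A -> iso_apply s w \in A.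
Proof. by move=> HA Hw; rewrite -HA; apply: imset_f. Qed.

Theorem mainTheorem9 (q n : nat) (mi : 'I_n -> nat)
  (f : {ffun 'I_n -> 'I_q} -> 'I_q)
  (h : forall i : 'I_n, {ffun 'I_(mi i) -> 'I_q} -> 'I_q) :
  2 <= n ->
  (forall i, 1 <= mi i) ->
  (forall i, is_iterated_group (h i)) ->
  is_quasigroup f ->
  iso_transitive_qg f ->
  (forall (i : 'I_n) (sigma : isotopism q 'I_n.+1),
     is_autotopy sigma (qgraph f) ->
     exists tau : isotopism q 'I_(mi i),
       forall z : {ffun 'I_(mi i) -> 'I_q},
         h i (iso_apply tau z) = sigma (lift ord0 i) (h i z)) ->
  is_quasigroup (compose_qg f h) /\ iso_transitive_qg (compose_qg f h).
Proof.
move=> _ _ Hh Hqf Htr Hc; split.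
  move=> z z' /differP [k [Hk Ho]].
  have [i0 [j0 Ek]] : exists i0 (j0 : 'I_(mi i0)), k = tagnat.Rank i0 j0.
    by exists (tagnat.sig1 k), (tagnat.sig2 k); rewrite tagnat.sig2K.
  subst k.
  rewrite /compose_qg; apply: Hqf; apply/differP; exists i0; split.
    rewrite !ffunE; have [op [e [G [_ Hhi]]]] := Hh i0; rewrite !Hhi.
    apply: (Pf_qg G (k := j0)); first by rewrite !ffunE.
    move=> j Hj; rewrite !ffunE; apply: Ho.
    by rewrite -val_eqE tagnat.eq_Rank eqxx /= val_eqE.
  move=> i Hi; rewrite !ffunE; congr (h i _); apply/ffunP => j; rewrite !ffunE.
  by apply: Ho; rewrite -val_eqE tagnat.eq_Rank (negbTE Hi).
move=> x y Hx Hy.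
have Hux : Ux h x \in qgraph f by rewrite U_graph.
have Huy : Ux h y \in qgraph f by rewrite U_graph.
have [sigma [Hs Hsxy]] := Htr _ _ Hux Huy.
have [tau Htau] : exists tau : forall i, isotopism q 'I_(mi i), forall i z,
    h i (iso_apply (tau i) z) = sigma (lift ord0 i) (h i z).
  exact: (dchoice (B := fun i => isotopism q 'I_(mi i))
    (P := fun i t => forall z, h i (iso_apply t z) = sigma (lift ord0 i) (h i z))
    (fun i => Hc i sigma Hs)).
have [rho Hrho] : exists rho : forall i, isotopism q 'I_(mi i), forall i,
    (forall z, h i (iso_apply (rho i) z) = h i z) /\
    forall j, rho i j (iso_apply (tau i) (blk (tl x) i) j) = blk (tl y) i j.
  apply: (dchoice (B := fun i => isotopism q 'I_(mi i))
    (P := fun i r => (forall z, h i (iso_apply r z) = h i z) /\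
      forall j, r j (iso_apply (tau i) (blk (tl x) i) j) = blk (tl y) i j)) => i.
  have [op [e [G [_ Hhi]]]] := Hh i.
  have Heq : op e (Pf op e (iso_apply (tau i) (blk (tl x) i))) = Pf op e (blk (tl y) i).
    rewrite (op0 G) /Pf -!Hhi Htau.
    have := congr1 (fun w : {ffun 'I_n.+1 -> 'I_q} => w (lift ord0 i)) Hsxy.
    by rewrite /= /iso_apply /Ux !ffunE liftK.
  have [r [R1 R2]] := transl G Heq.
  exists r; split; last exact: R1.
  by move=> z; rewrite !Hhi; have := R2 z; rewrite (op0 G).
pose C i j := (tau i j * rho i j)%g.
pose T : isotopism q 'I_(\sum_(i < n) mi i).+1 := fun k =>
  if unlift ord0 k is Some k' then C (tag (@tagnat.sig n mi k')) (tagged (@tagnat.sig n mi k'))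
  else sigma ord0.
have T0 : T ord0 = sigma ord0 by rewrite /T unlift_none.
have TS p : T (lift ord0 (@tagnat.rank n mi p)) = C (tag p) (tagged p).
  by rewrite /T liftK tagnat.rankK.
have key z : Ux h (iso_apply T z) = iso_apply sigma (Ux h z).
  apply/ffunP => k; rewrite /Ux !ffunE.
  case: (unliftP ord0 k) => [i|] ->; rewrite ?liftK ?unlift_none; last first.
    by rewrite /iso_apply ?ffunE T0.
  have -> : blk (tl (iso_apply T z)) i = iso_apply (rho i) (iso_apply (tau i) (blk (tl z) i)).
    apply/ffunP => j; rewrite /blk /tl /iso_apply !ffunE.
    by rewrite (TS (existT (fun i0 : 'I_n => 'I_(mi i0)) i j)) permM.
  by rewrite (proj1 (Hrho i)) Htau.
exists T; split.
  rewrite /is_autotopy; apply/eqP; rewrite eqEcard card_imset; last first.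
    move=> z1 z2 /ffunP E; apply/ffunP => k; have := E k; rewrite !ffunE.
    exact: perm_inj.
  rewrite leqnn andbT; apply/subsetP => w /imsetP [z Hz ->].
  by rewrite -U_graph key; apply: (aut_mem Hs); rewrite U_graph.
apply/ffunP => k; rewrite ffunE; case: (unliftP ord0 k) => [k'|] ->.
  have [[i j] Ek] : exists p, k' = tagnat.rank p.
    by exists (tagnat.sig k'); rewrite tagnat.sigK.
  subst k'; rewrite (TS (existT (fun i0 : 'I_n => 'I_(mi i0)) i j)) permM /=.
  have := (proj2 (Hrho i)) j; rewrite /iso_apply /blk /tl !ffunE.
  by apply.
rewrite T0; have := congr1 (fun w : {ffun 'I_n.+1 -> 'I_q} => w ord0) Hsxy.
by rewrite /= /iso_apply /Ux !ffunE unlift_none.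
Qed.
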